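(* Let $|\Psi\rangle\in\mathcal{B}^n$ be an $M$-party stabilizer state with stabilizer group $S$, and suppose $S=S_{loc}:=\sum_{\alpha\in M}S_{\hat\alpha}$. Then $\Gamma(\Psi)=\{|\Psi\rangle\langle\Psi|\}$, where $\Gamma(\Psi)$ is the set of density operators $\rho$ on $\mathcal{B}^n$ with $\mathrm{Tr}_\alpha\rho=\mathrm{Tr}_\alpha|\Psi\rangle\langle\Psi|$ for all $\alpha\in M$.
   Context: Let $G^n\cong\mathbb{F}_2^{2n}$, with elements $f=(a_1,b_1,\dots,a_n,b_n)$; $\sigma_{00}=I,\sigma_{10}=\sigma^x,\sigma_{01}=\sigma^z,\sigma_{11}=\sigma^y$, $\sigma(f)=\sigma_{a_1b_1}\otimes\cdots\otimes\sigma_{a_nb_n}$ on $\mathcal{B}^n=(\mathbb{C}^2)^{\otimes n}$; symplectic form $\omega(f,f')=\sum_j(a_jb_j'+b_ja_j')\bmod 2$. A subspace $S$ is self-dual if $S=\{f:\omega(f,g)=0\ \forall g\in S\}$; a stabilizer state with stabilizer group $S$ (self-dual) is the unique up-to-phase unit vector with $\sigma(f)|\Psi\rangle=\epsilon(f)|\Psi\rangle$ for all $f\in S$ for fixed consistent signs $\epsilon(f)\in\{\pm1\}$. Party $\alpha\in M$ (a finite set) holds $n_\alpha$ qubits, $n=\sum_\alpha n_\alpha$; $f_\alpha$ is the restriction of $f$ to party $\alpha$'s qubits; co-local subgroup $S_{\hat\alpha}=\{g\in S:g_\alpha=0\}$. $\mathrm{Tr}_\alpha$ is the partial trace over party $\alpha$'s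 qubits. *)

(* Defs.v *)
From mathcomp Require Import all_boot all_order all_algebra.
Set Implicit Arguments. Unset Strict Implicit. Unset Printing Implicit Defensive.
Import Order.TTheory GRing.Theory Num.Theory.
Local Open Scope ring_scope.

(* Computational basis labels of B^n = (C^2)^{(x)n}: bit strings. *)
Definition bits (n : nat) := {ffun 'I_n -> bool}.

(* Elements f = (a_1,b_1,...,a_n,b_n) of G^n = F_2^{2n}; f j = (a_j, b_j). *)
Definition pauliG (n : nat) := {ffun 'I_n -> bool * bool}.

Definition gzero (n : nat) : pauliG n := [ffun _ => (false, false)].
Definition gadd (n : nat) (f g : pauliG n) : pauliG n :=
  [ffun j => ((f j).1 (+) (g j).1, (f j).2 (+) (g j).2)].

Definition omega (n : nat) (f g : pauliG n) : bool :=
  \big[addb/false]_(j < n) (((f j).1 && (g j).2) (+) ((f j).2 && (g j).1)).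

Definition self_dual (n : nat) (S : {set pauliG n}) : Prop :=
  S = [set f : pauliG n | [forall g in S, ~~ omega f g]].

(* single-qubit Pauli sigma_{ab} entries <x| sigma_{ab} |y>:
   sigma_00 = I, sigma_10 = X, sigma_01 = Z, sigma_11 = Y = [[0,-i],[i,0]] *)
Definition pauli1 (C : numClosedFieldType) (ab : bool * bool) (x y : bool) : C :=
  if x == (y (+) ab.1) then
    (if ab.1 && ab.2 then 'i else 1) * (if ab.2 && y then -1 else 1)
  else 0.

Definition sigma (C : numClosedFieldType) (n : nat) (f : pauliG n) (x y : bits n) : C :=
  \prod_(j < n) pauli1 C (f j) (x j) (y j).

Definition apply_op (C : numClosedFieldType) (n : nat)
  (A : bits n -> bits n -> C) (v : bits n -> C) (x : bits n) : C :=
  \sum_(y : bits n) A x y * v y.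

(* Parties: qubit j belongs to party (party j); party alpha holds
   n_alpha = #{j | party j = alpha} qubits. *)

Definition coloc (n : nat) (M : finType) (party : 'I_n -> M)
  (S : {set pauliG n}) (alpha : M) : {set pauliG n} :=
  [set g in S | [forall j : 'I_n, (party j == alpha) ==> (g j == (false, false))]].

Definition Sloc (n : nat) (M : finType) (party : 'I_n -> M)
  (S : {set pauliG n}) : {set pauliG n} :=
  [set f : pauliG n | [exists g : {ffun M -> pauliG n},
     [forall alpha, g alpha \in coloc party S alpha] &&
     (f == \big[@gadd n/gzero n]_(alpha : M) g alpha)]].

Definition is_density (C : numClosedFieldType) (n : nat) (rho : bits n -> bits n -> C) : Prop :=
  (forall v : bits n -> C,
     0 <= \sum_(x : bits n) \sum_(y : bits n) (v x)^* * rho x y * v y)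
  /\ \sum_(x : bits n) rho x x = 1.

Definition proj (C : numClosedFieldType) (n : nat) (psi : bits n -> C) (x y : bits n) : C :=
  psi x * (psi y)^*.

(* The result is represented as
   a function on full bit strings that only depends on the coordinates of
   the qubits NOT held by alpha (those of alpha are overwritten by the
   summation variable z), so equality of these functions is exactly
   equality of the reduced operators. *)
Definition glue (n : nat) (M : finType) (party : 'I_n -> M) (alpha : M)
  (x z : bits n) : bits n :=
  [ffun j => if party j == alpha then z j else x j].

Definition ptrace (C : numClosedFieldType) (n : nat) (M : finType) (party : 'I_n -> M)
  (alpha : M) (rho : bits n -> bits n -> C) (x y : bits n) : C :=
  \sum_(z : bits n | [forall j, (party j != alpha) ==> ~~ z j])
     rho (glue party alpha x z) (glue party alpha y z).

Definition Gamma (C : numClosedFieldType) (n : nat) (M : finType) (party : 'I_n -> M)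
  (psi : bits n -> C) (rho : bits n -> bits n -> C) : Prop :=
  is_density rho /\
  forall alpha x y, ptrace party alpha rho x y = ptrace party alpha (proj psi) x y.

(* Main.v *)
Require Import Defs.
From mathcomp Require Import all_boot all_order all_algebra ring.
From Stdlib Require Import FunctionalExtensionality.
Import Order.TTheory GRing.Theory Num.Theory.
Local Open Scope ring_scope.
Set Warnings "-notation-overridden,-ambiguous-paths".
Set Implicit Arguments. Unset Strict Implicit.

Definition c1 (C : numClosedFieldType) (a b : bool * bool) : C :=
  match a, b with
  | (true,false), (false,true) => - 'i
  | (false,true), (true,false) => 'i
  | (true,false), (true,true) => 'i
  | (true,true), (true,false) => - 'i
  | (false,true), (true,true) => - 'i
  | (true,true), (false,true) => 'i
  | _, _ => 1
  end.

Lemma iiC (C : numClosedFieldType) : 'i * 'i = -1 :> C.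
Proof. by rewrite -expr2 sqrCi. Qed.

Lemma pauli1_herm (C : numClosedFieldType) ab x y :
  pauli1 C ab x y = (pauli1 C ab y x)^*.
Proof.
have ci : ('i : C)^* = - 'i by exact: conjCi.
have cni : (- ('i : C))^* = 'i by rewrite -ci conjCK.
case: ab => [[] []]; case: x; case: y; rewrite /pauli1 /= ?mulr1 ?mul1r ?mulrN ?mulNr ?opprK
  ?ci ?cni ?rmorph1 ?rmorphN1 ?rmorph0 ?opprK //.
all: by rewrite mulr1 ?cni.
Qed.

Lemma pauli1_mul (C : numClosedFieldType) a b x z :
  \sum_(y : bool) pauli1 C a x y * pauli1 C b y z =
  c1 C a b * pauli1 C (a.1 (+) b.1, a.2 (+) b.2) x z.
Proof.
rewrite big_bool.
case: a => [[] []]; case: b => [[] []]; case: x; case: z; rewrite /pauli1 /c1 /=;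
  rewrite ?(mulr1, mul1r, mulrN, mulNr, opprK, mulr0, mul0r, addr0, add0r, oppr0, subr0, iiC, opprK) //.
all: by rewrite ?(mulr1, mul1r, mulrN, mulNr, opprK, mulr0, mul0r, addr0, add0r, oppr0, subr0, iiC, opprK).
Qed.

Lemma c1_comm (C : numClosedFieldType) a b :
  c1 C a b = (-1) ^+ ((a.1 && b.2) (+) (a.2 && b.1)) * c1 C b a.
Proof.
by case: a => [[] []]; case: b => [[] []]; rewrite /c1 /= ?mul1r ?mulN1r ?opprK.
Qed.

Lemma c1_diag (C : numClosedFieldType) a : c1 C a a = 1.
Proof. by case: a => [[] []]. Qed.

Lemma pauli1_00 (C : numClosedFieldType) x y : pauli1 C (false,false) x y = (x == y)%:R.
Proof. by rewrite /pauli1 /= addbF mulr1; case: (x == y). Qed.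

Lemma pauli1_complete (C : numClosedFieldType) a b c d :
  \sum_(p : bool * bool) pauli1 C p a b * pauli1 C p c d = 2 * ((a == d) && (b == c))%:R.
Proof.
rewrite -(pair_bigA _ (fun u v => pauli1 C (u,v) a b * pauli1 C (u,v) c d)) /=.
rewrite !big_bool /=.
case: a; case: b; case: c; case: d; rewrite /pauli1 /=;
  rewrite ?(mulr1, mul1r, mulrN, mulNr, opprK, mulr0, mul0r, addr0, add0r, oppr0, subr0, iiC, opprK) //.
all: by rewrite addNr.
Qed.

Definition mm (C : numClosedFieldType) n (A B : bits n -> bits n -> C) (x z : bits n) : C :=
  \sum_(y : bits n) A x y * B y z.
Definition tr (C : numClosedFieldType) n (A : bits n -> bits n -> C) : C := \sum_(x : bits n) A x x.
Definition cc (C : numClosedFieldType) n (f g : pauliG n) : C := \prod_(j < n) c1 C (f j) (g j).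

Lemma sum_prod_bits (C : numClosedFieldType) n (F : 'I_n -> bool -> C) :
  \sum_(y : bits n) \prod_(j < n) F j (y j) = \prod_(j < n) \sum_(b : bool) F j b.
Proof. by rewrite bigA_distr_bigA. Qed.

Lemma sum_prod_pauli (C : numClosedFieldType) n (F : 'I_n -> bool * bool -> C) :
  \sum_(y : pauliG n) \prod_(j < n) F j (y j) = \prod_(j < n) \sum_(b : bool * bool) F j b.
Proof. by rewrite bigA_distr_bigA. Qed.

Lemma sigma_mul (C : numClosedFieldType) n (f g : pauliG n) x z :
  mm (sigma C f) (sigma C g) x z = cc C f g * sigma C (gadd f g) x z.
Proof.
rewrite /mm /sigma /cc.
under eq_bigr do rewrite -big_split /=.
rewrite (sum_prod_bits (fun j b => pauli1 C (f j) (x j) b * pauli1 C (g j) b (z j))) -big_split /=.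
apply: eq_bigr => j _; by rewrite pauli1_mul /gadd ffunE.
Qed.

Lemma sigma_herm (C : numClosedFieldType) n (f : pauliG n) x y :
  sigma C f x y = (sigma C f y x)^*.
Proof.
rewrite /sigma rmorph_prod; apply: eq_bigr => j _; exact: pauli1_herm.
Qed.

Lemma sigma0 (C : numClosedFieldType) n x y : sigma C (gzero n) x y = (x == y)%:R.
Proof.
rewrite /sigma.
under eq_bigr do rewrite /gzero ffunE pauli1_00.
case: eqP => [->|/eqP ne]; first by rewrite big1 // => j _; rewrite eqxx.
have [j hj] : exists j, x j != y j.
  apply/existsP; rewrite -negb_forall; apply: contra ne => /forallP h.
  by apply/eqP/ffunP => j; apply/eqP.
by rewrite (bigD1 j) //= (negbTE hj) mul0r.
Qed.

Lemma cc_comm (C : numClosedFieldType) n (f g : pauliG n) :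
  cc C f g = (-1) ^+ omega f g * cc C g f.
Proof.
rewrite /cc /omega (big_morph (fun b : bool => (-1) ^+ b : C) (id1 := 1) (op1 := *%R)).
- by rewrite -big_split; apply: eq_bigr => j _; rewrite c1_comm.
- by move=> a b; rewrite signr_addb.
- by [].
Qed.

Lemma cc_diag (C : numClosedFieldType) n (f : pauliG n) : cc C f f = 1.
Proof. by rewrite /cc big1 // => j _; rewrite c1_diag. Qed.

Lemma gadd_diag n (f : pauliG n) : gadd f f = gzero n.
Proof. by apply/ffunP => j; rewrite /gadd /gzero !ffunE !addbb. Qed.

Lemma gaddC n (f g : pauliG n) : gadd f g = gadd g f.
Proof. by apply/ffunP => j; rewrite /gadd !ffunE addbC [(_ j).2 (+) _]addbC. Qed.

Lemma sigma_sq (C : numClosedFieldType) n (f : pauliG n) x z :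
  mm (sigma C f) (sigma C f) x z = (x == z)%:R.
Proof. by rewrite sigma_mul cc_diag mul1r gadd_diag sigma0. Qed.

Lemma sigma_anti (C : numClosedFieldType) n (f g : pauliG n) x z :
  mm (sigma C f) (sigma C g) x z = (-1) ^+ omega f g * mm (sigma C g) (sigma C f) x z.
Proof. by rewrite !sigma_mul cc_comm mulrA gaddC. Qed.

Lemma sigma_complete (C : numClosedFieldType) n (a b c d : bits n) :
  \sum_(f : pauliG n) sigma C f a b * sigma C f c d = 2 ^+ n * ((a == d) && (b == c))%:R.
Proof.
rewrite /sigma.
under eq_bigr do rewrite -big_split /=.
rewrite (sum_prod_pauli (fun j p => pauli1 C p (a j) (b j) * pauli1 C p (c j) (d j))).
under eq_bigr do rewrite pauli1_complete.
rewrite big_split /= prodr_const card_ord; congr (_ * _).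
case: (boolP ((a == d) && (b == c))) => [/andP [/eqP -> /eqP ->]|h].
  by rewrite big1 // => j _; rewrite !eqxx.
have [j hj] : exists j, ~~ ((a j == d j) && (b j == c j)).
  apply/existsP; rewrite -negb_forall; apply: contra h => /forallP hh.
  by apply/andP; split; apply/eqP/ffunP => k; case/andP: (hh k) => /eqP ? /eqP ?.
by rewrite (bigD1 j) //= (negbTE hj) mul0r.
Qed.

Lemma mmA (C : numClosedFieldType) n (A B D : bits n -> bits n -> C) x z :
  mm (mm A B) D x z = mm A (mm B D) x z.
Proof.
rewrite /mm.
under eq_bigr do rewrite mulr_suml.
under [RHS]eq_bigr do rewrite mulr_sumr.
rewrite exchange_big; apply: eq_bigr => y _; apply: eq_bigr => w _; by rewrite mulrA.
Qed.

Lemma tr_mmC (C : numClosedFieldType) n (A B : bits n -> bits n -> C) :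
  tr (mm A B) = tr (mm B A).
Proof.
rewrite /tr /mm exchange_big; apply: eq_bigr => y _; apply: eq_bigr => w _; by rewrite mulrC.
Qed.

Lemma pauli_expand (C : numClosedFieldType) n (A : bits n -> bits n -> C) u v :
  \sum_(f : pauliG n) sigma C f u v * tr (mm (sigma C f) A) = 2 ^+ n * A u v.
Proof.
rewrite /tr /mm.
transitivity (\sum_(x : bits n) \sum_(y : bits n) A y x * \sum_(f : pauliG n) sigma C f u v * sigma C f x y).
  under eq_bigr do rewrite mulr_sumr.
  rewrite exchange_big; apply: eq_bigr => x _.
  under eq_bigr do rewrite mulr_sumr.
  rewrite exchange_big; apply: eq_bigr => y _.
  rewrite mulr_sumr; apply: eq_bigr => f _; by rewrite mulrA mulrC.
under eq_bigr do under eq_bigr do rewrite sigma_complete.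
rewrite (bigD1 v) //= [X in _ + X]big1 ?addr0; last first.
  move=> x hx; apply: big1 => y _; by rewrite [v == x]eq_sym (negbTE hx) andbF mulr0 mulr0.
rewrite (bigD1 u) //= big1 ?addr0; last first.
  move=> y hy; by rewrite [u == y]eq_sym (negbTE hy) mulr0 mulr0.
by rewrite !eqxx mulr1 mulrC.
Qed.

Lemma pauli_determined (C : numClosedFieldType) n (A B : bits n -> bits n -> C) :
  (forall f, tr (mm (sigma C f) A) = tr (mm (sigma C f) B)) -> forall x y, A x y = B x y.
Proof.
move=> h x y.
have e : \sum_(f : pauliG n) sigma C f x y * tr (mm (sigma C f) A)
        = \sum_(f : pauliG n) sigma C f x y * tr (mm (sigma C f) B).
  by apply: eq_bigr => f _; rewrite h.
rewrite !pauli_expand in e.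
move: e; apply: mulfI; by rewrite expf_neq0 // pnatr_eq0.
Qed.

Lemma cjD (C : numClosedFieldType) (x y : C) : (x + y)^* = x^* + y^*.
Proof. exact: rmorphD. Qed.
Lemma cjM (C : numClosedFieldType) (x y : C) : (x * y)^* = x^* * y^*.
Proof. exact: rmorphM. Qed.
Lemma cjS (C : numClosedFieldType) n (F : bits n -> C) :
  (\sum_(x : bits n) F x)^* = \sum_(x : bits n) (F x)^*.
Proof. exact: rmorph_sum. Qed.

Definition qf (C : numClosedFieldType) n (A : bits n -> bits n -> C) (v : bits n -> C) : C :=
  \sum_(x : bits n) \sum_(y : bits n) (v x)^* * A x y * v y.
Definition psd (C : numClosedFieldType) n (A : bits n -> bits n -> C) : Prop :=
  forall v : bits n -> C, 0 <= qf A v.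
Definition herm (C : numClosedFieldType) n (A : bits n -> bits n -> C) : Prop :=
  forall x y, A x y = (A y x)^*.

Lemma sum_delta2r (C : numClosedFieldType) n (G : bits n -> C) a b c :
  \sum_(y : bits n) G y * ((y == a)%:R + c * (y == b)%:R) = G a + c * G b.
Proof.
under eq_bigr do rewrite mulrDr.
rewrite big_split /=; congr (_ + _).
  rewrite (bigD1 a) //= eqxx mulr1 big1 ?addr0 // => y /negbTE ->; by rewrite mulr0.
rewrite (bigD1 b) //= eqxx mulr1 big1 ?addr0; first by rewrite mulrC.
move=> y /negbTE ->; by rewrite mulr0 mulr0.
Qed.

Lemma sum_delta2l (C : numClosedFieldType) n (G : bits n -> C) a b c :
  \sum_(y : bits n) ((y == a)%:R + c * (y == b)%:R) * G y = G a + c * G b.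
Proof. rewrite -(sum_delta2r G a b c); apply: eq_bigr => y _; by rewrite mulrC. Qed.

Lemma qf_two (C : numClosedFieldType) n (A : bits n -> bits n -> C) a b c :
  qf A (fun x => (x == a)%:R + c * (x == b)%:R) =
  A a a + c * A a b + c^* * (A b a + c * A b b).
Proof.
rewrite /qf.
under eq_bigr => x _ do under eq_bigr => y _ do rewrite -mulrA.
under eq_bigr => x _ do rewrite -mulr_sumr (sum_delta2r (fun y => A x y)) rmorphD rmorphM /= !rmorph_nat.
by rewrite (sum_delta2l (fun x => A x a + c * A x b) a b c^*).
Qed.

Lemma psd_herm (C : numClosedFieldType) n (A : bits n -> bits n -> C) : psd A -> herm A.
Proof.
move=> hA a b.
have re c : (A a a + c * A a b + c^* * (A b a + c * A b b))^* =
            A a a + c * A a b + c^* * (A b a + c * A b b).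
  by rewrite -qf_two geC0_conj.
have r0 x : (A x x)^* = A x x.
  have := re 0; rewrite rmorph0 !mul0r !addr0.
  have := hA (fun y => (y == x)%:R + 0 * (y == x)%:R); rewrite qf_two rmorph0 !mul0r !addr0.
  by move/geC0_conj.
have cD x y : (x + y)^* = x^* + y^* by exact: rmorphD.
have cM x y : (x * y)^* = x^* * y^* by exact: rmorphM.
have ci : ('i : C)^* = - 'i by exact: conjCi.
have cK x : (x^*)^* = x by exact: conjCK.
have c1 : (1 : C)^* = 1 by exact: rmorph1.
have e1 := re 1; rewrite ?(cD, cM, c1, mul1r, r0) in e1.
have e2 := re 'i; rewrite ?(cD, cM, ci, cK, r0) in e2.
have cNi : (- ('i : C))^* = 'i by rewrite -ci cK.
rewrite cNi in e2.
set p := A a b in e1 e2 *; set q := A b a in e1 e2 *.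
have h1 : p^* + q^* = p + q.
  have -> : p^* + q^* = (A a a + p^* + (q^* + A b b)) - A a a - A b b by ring.
  rewrite e1; ring.
have h2 : q^* - p^* = p - q.
  apply: (mulfI (neq0Ci C)).
  have -> : 'i * (q^* - p^*) = (A a a + - 'i * p^* + 'i * (q^* + - 'i * A b b)) - A a a + 'i * 'i * A b b by ring.
  rewrite e2; ring.
apply: (mulfI (_ : 2 != 0 :> C)); first by rewrite pnatr_eq0.
have -> : 2 * p = (p + q) + (p - q) by ring.
rewrite -h1 -h2; ring.
Qed.

Definition bf (C : numClosedFieldType) n (A : bits n -> bits n -> C) (v w : bits n -> C) : C :=
  \sum_(x : bits n) \sum_(y : bits n) (v x)^* * A x y * w y.

Lemma qf_expand (C : numClosedFieldType) n (A : bits n -> bits n -> C) w u c :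
  qf A (fun x => w x + c * u x) =
  qf A w + c * bf A w u + c^* * bf A u w + c^* * c * qf A u.
Proof.
have cD x y : (x + y)^* = x^* + y^* by exact: rmorphD.
have cM x y : (x * y)^* = x^* * y^* by exact: rmorphM.
rewrite /qf /bf.
transitivity (\sum_(x : bits n) \sum_(y : bits n)
   ((w x)^* * A x y * w y + c * ((w x)^* * A x y * u y) + c^* * ((u x)^* * A x y * w y)
     + c^* * c * ((u x)^* * A x y * u y))).
  apply: eq_bigr => x _; apply: eq_bigr => y _; rewrite cD cM; ring.
under eq_bigr => x _ do rewrite !big_split /= -!mulr_sumr.
by rewrite !big_split /= -!mulr_sumr.
Qed.

Lemma psd_null (C : numClosedFieldType) n (A : bits n -> bits n -> C) w :
  psd A -> qf A w = 0 -> forall x, \sum_(y : bits n) A x y * w y = 0.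
Proof.
move=> hA hw.
have hH := psd_herm hA.
set u := fun x => \sum_(y : bits n) A x y * w y.
have cM x y : (x * y)^* = x^* * y^* by exact: rmorphM.
set N := \sum_(x : bits n) u x * (u x)^*.
have b1 : bf A u w = N.
  rewrite /bf /N; apply: eq_bigr => x _.
  rewrite [RHS]mulrC [X in _ * X]/u mulr_sumr; apply: eq_bigr => y _; by rewrite mulrA.
have b2 : bf A w u = N.
  rewrite /bf exchange_big /N; apply: eq_bigr => y _.
  rewrite /u cjS mulr_sumr; apply: eq_bigr => x _.
  by rewrite cjM (hH y x) conjCK mulrC [A x y * _]mulrC.
have N0 : 0 <= N by apply: sumr_ge0 => x _; exact: mul_conjC_ge0.
set q := qf A u.
have q0 : 0 <= q by exact: hA.
have q1 : 0 < q + 1 by rewrite ltr_wpDl // ltr01.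
set t := N / (q + 1).
have ct : t^* = t by apply: geC0_conj; rewrite divr_ge0 // ltW.
have cN : (- t)^* = - t by rewrite -mulN1r cjM ct rmorphN1 mulN1r.
have e := hA (fun x => w x + (- t) * u x).
rewrite qf_expand hw b1 b2 cN -/q in e.
have ev : 0 + - t * N + - t * N + - t * - t * q = - (N ^+ 2 * (q + 2) / (q + 1) ^+ 2).
  rewrite /t; field; exact: lt0r_neq0.
rewrite ev oppr_ge0 in e.
have e0 : N ^+ 2 * (q + 2) / (q + 1) ^+ 2 = 0.
  apply: le_anti; rewrite e /=; apply: divr_ge0; last exact: exprn_ge0 (ltW q1).
  apply: mulr_ge0; first exact: exprn_ge0.
  by apply: addr_ge0.
have NN : N = 0.
  move/eqP: e0; rewrite !mulf_eq0 invr_eq0 !expf_eq0 /=.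
  rewrite (negbTE (lt0r_neq0 q1)) orbF.
  have -> : (q + 2 == 0) = false.
    apply/negbTE/lt0r_neq0; by rewrite ltr_wpDl // ltr0n.
  by rewrite orbF orbb => /eqP.
move=> x; apply/eqP; rewrite -mul_conjC_eq0; apply/eqP.
move/eqP: NN; rewrite psumr_eq0; last by move=> y _; exact: mul_conjC_ge0.
by move/allP => /(_ x (mem_index_enum _)) /eqP.
Qed.

Lemma sum_dl (C : numClosedFieldType) n (G : bits n -> C) x :
  \sum_(k : bits n) (x == k)%:R * G k = G x.
Proof.
rewrite (bigD1 x) //= eqxx mul1r big1 ?addr0 // => k hk; by rewrite eq_sym (negbTE hk) mul0r.
Qed.

Lemma sum_dr (C : numClosedFieldType) n (G : bits n -> C) x :
  \sum_(k : bits n) G k * (x == k)%:R = G x.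
Proof. rewrite -(sum_dl G x); apply: eq_bigr => k _; by rewrite mulrC. Qed.

Lemma psd_stab (C : numClosedFieldType) n (A : bits n -> bits n -> C) (f : pauliG n) e :
  psd A -> tr A = 1 -> e^* = e -> e * e = 1 -> tr (mm A (sigma C f)) = e ->
  forall x z, mm A (sigma C f) x z = e * A x z.
Proof.
move=> hA htr ce ee ht.
set w := fun k y => (y == k)%:R - e * sigma C f y k.
have key : forall x y, \sum_(k : bits n) (w k x)^* * w k y
    = 2 * (x == y)%:R - 2 * e * sigma C f y x.
  move=> x y.
  transitivity (\sum_(k : bits n) ((x == k)%:R * (y == k)%:R - e * ((x == k)%:R * sigma C f y k)
      - e * (sigma C f k x * (y == k)%:R) + e * e * (sigma C f y k * sigma C f k x))).
    apply: eq_bigr => k _; rewrite /w cjD -mulN1r cjM rmorphN1 cjM ce -sigma_herm rmorph_nat.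
    ring.
  rewrite !big_split /= !sumrN -!mulr_sumr sum_dl sum_dl sum_dr.
  have -> : \sum_(k : bits n) sigma C f y k * sigma C f k x = (y == x)%:R by exact: sigma_sq.
  rewrite ee mul1r eq_sym; ring.
have tot : \sum_(k : bits n) qf A (w k) = 0.
  rewrite /qf.
  transitivity (\sum_(x : bits n) \sum_(y : bits n) A x y * \sum_(k : bits n) (w k x)^* * w k y).
    rewrite exchange_big; apply: eq_bigr => x _.
    rewrite exchange_big; apply: eq_bigr => y _.
    rewrite mulr_sumr; apply: eq_bigr => k _; ring.
  under eq_bigr => x _ do under eq_bigr => y _ do rewrite key.
  transitivity (2 * tr A - 2 * e * tr (mm A (sigma C f))).
    rewrite /tr /mm mulr_sumr mulr_sumr -sumrB; apply: eq_bigr => x _.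
    under eq_bigr do rewrite mulrBr mulrA.
    rewrite sumrB (sum_dr (fun y => A x y * 2)) mulrC; congr (_ - _).
    rewrite mulr_sumr; apply: eq_bigr => y _; ring.
  by rewrite htr ht mulr1 -mulrA ee mulr1 subrr.
move=> x k.
have q0 : qf A (w k) = 0.
  move/eqP: tot; rewrite psumr_eq0; last by move=> j _; exact: hA.
  by move/allP => /(_ k (mem_index_enum _)) /eqP.
have := psd_null hA q0 x.
under eq_bigr do rewrite /w mulrBr eq_sym.
rewrite sumrB sum_dr => /eqP; rewrite subr_eq0 => /eqP ->.
rewrite /mm mulr_sumr; apply: eq_bigr => y _.
by rewrite mulrCA (mulrA e e) ee mul1r.
Qed.

Definition zon n (M : finType) (party : 'I_n -> M) alpha (u : bits n) : bool :=
  [forall j, (party j == alpha) ==> ~~ u j].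
Definition zoff n (M : finType) (party : 'I_n -> M) alpha (z : bits n) : bool :=
  [forall j, (party j != alpha) ==> ~~ z j].
Definition offp n (M : finType) (party : 'I_n -> M) alpha (x : bits n) : bits n :=
  [ffun j => if party j == alpha then false else x j].
Definition onp n (M : finType) (party : 'I_n -> M) alpha (x : bits n) : bits n :=
  [ffun j => if party j == alpha then x j else false].

Lemma off_glue n (M : finType) (party : 'I_n -> M) alpha u z :
  (offp party alpha (glue party alpha u z) == u) = zon party alpha u.
Proof.
apply/eqP/forallP => [h j|h].
  have := congr1 (fun g : bits n => g j) h; rewrite /offp /glue !ffunE.
  by case: (party j == alpha) => //= <-.
apply/ffunP => j; rewrite /offp /glue !ffunE; have := h j.
by case: (party j == alpha) => //= /negbTE ->.
Qed.

Lemma on_glue n (M : finType) (party : 'I_n -> M) alpha u z :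
  (onp party alpha (glue party alpha u z) == z) = zoff party alpha z.
Proof.
apply/eqP/forallP => [h j|h].
  have := congr1 (fun g : bits n => g j) h; rewrite /onp /glue !ffunE.
  by case: (party j == alpha) => //= <-.
apply/ffunP => j; rewrite /onp /glue !ffunE; have := h j.
by case: (party j == alpha) => //= /negbTE ->.
Qed.

Lemma split_sum (C : numClosedFieldType) n (M : finType) (party : 'I_n -> M) alpha (F : bits n -> C) :
  \sum_(x : bits n) F x =
  \sum_(u : bits n | zon party alpha u) \sum_(z : bits n | zoff party alpha z) F (glue party alpha u z).
Proof.
rewrite pair_big_dep /=.
rewrite (reindex_onto (fun p : bits n * bits n => glue party alpha p.1 p.2)
                      (fun x => (offp party alpha x, onp party alpha x))) /=.
  apply: eq_bigl => -[u z] /=; by rewrite xpair_eqE off_glue on_glue.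
move=> x _; apply/ffunP => j; rewrite /glue /offp /onp !ffunE.
by case: (party j == alpha).
Qed.

Definition srest (C : numClosedFieldType) n (M : finType) (party : 'I_n -> M) alpha
  (g : pauliG n) (v u : bits n) : C :=
  \prod_(j < n | party j != alpha) pauli1 C (g j) (v j) (u j).

Lemma sigma_glue (C : numClosedFieldType) n (M : finType) (party : 'I_n -> M) (S : {set pauliG n})
  alpha g v u z z' :
  g \in coloc party S alpha -> zoff party alpha z -> zoff party alpha z' ->
  sigma C g (glue party alpha v z') (glue party alpha u z) =
  (z' == z)%:R * srest C party alpha g v u.
Proof.
rewrite /coloc inE => /andP [_ /forallP hg] hz hz'.
rewrite /sigma (bigID (fun j => party j == alpha)) /=; congr (_ * _); last first.
  apply: eq_bigr => j /negbTE hj; by rewrite /glue !ffunE hj.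
transitivity (\prod_(j < n | party j == alpha) ((z' j == z j)%:R : C)).
  apply: eq_bigr => j hj; move: (hg j); rewrite hj /= => /eqP ->.
  by rewrite pauli1_00 /glue !ffunE hj.
case: eqP => [->|ne].
  by rewrite big1 // => j _; rewrite eqxx.
have [j hj] : exists j, z' j != z j.
  apply/existsP; rewrite -negb_forall; apply/negP => /forallP h; apply: ne.
  by apply/ffunP => j; apply/eqP.
have pj : party j == alpha.
  apply: contraT => pj; move/forallP: hz => /(_ j); move/forallP: hz' => /(_ j).
  by rewrite pj /= => /negbTE h1 /negbTE h2; move: hj; rewrite h1 h2.
by rewrite (bigD1 j) //= (negbTE hj) mul0r.
Qed.

Lemma tr_local (C : numClosedFieldType) n (M : finType) (party : 'I_n -> M) (S : {set pauliG n})
  alpha g (A : bits n -> bits n -> C) :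
  g \in coloc party S alpha ->
  tr (mm A (sigma C g)) =
  \sum_(u : bits n | zon party alpha u) \sum_(v : bits n | zon party alpha v)
     srest C party alpha g v u * ptrace party alpha A u v.
Proof.
move=> hg.
rewrite /tr /mm (split_sum party alpha); apply: eq_bigr => u hu.
transitivity (\sum_(z : bits n | zoff party alpha z) \sum_(v : bits n | zon party alpha v)
   A (glue party alpha u z) (glue party alpha v z) * srest C party alpha g v u).
  apply: eq_bigr => z hz.
  rewrite (split_sum party alpha); apply: eq_bigr => v hv.
  rewrite (bigD1 z) //= big1 ?addr0.
    by rewrite (sigma_glue _ _ _ hg hz hz) eqxx mul1r.
  move=> z' /andP [hz' ne]; rewrite (sigma_glue _ _ _ hg hz hz') (negbTE ne); by rewrite mul0r mulr0.
rewrite exchange_big; apply: eq_bigr => v hv.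
rewrite /ptrace mulr_sumr; apply: eq_bigr => z hz; by rewrite mulrC.
Qed.

Lemma mm_scale_r (C : numClosedFieldType) n (A B : bits n -> bits n -> C) c :
  mm A (fun x z => c * B x z) = fun x z => c * mm A B x z.
Proof.
apply: functional_extensionality => x; apply: functional_extensionality => z.
rewrite /mm mulr_sumr; apply: eq_bigr => y _; by rewrite mulrCA.
Qed.

Lemma mm_scale_l (C : numClosedFieldType) n (A B : bits n -> bits n -> C) c :
  mm (fun x z => c * A x z) B = fun x z => c * mm A B x z.
Proof.
apply: functional_extensionality => x; apply: functional_extensionality => z.
rewrite /mm mulr_sumr; apply: eq_bigr => y _; by rewrite mulrA.
Qed.

Lemma tr_scale (C : numClosedFieldType) n (A : bits n -> bits n -> C) c :
  tr (fun x z => c * A x z) = c * tr A.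
Proof. by rewrite /tr mulr_sumr. Qed.

Lemma mmA' (C : numClosedFieldType) n (A B D : bits n -> bits n -> C) :
  mm (mm A B) D = mm A (mm B D).
Proof.
apply: functional_extensionality => x; apply: functional_extensionality => z; exact: mmA.
Qed.

Lemma fext2 (C : numClosedFieldType) n (A B : bits n -> bits n -> C) :
  (forall x z, A x z = B x z) -> A = B.
Proof.
move=> h; apply: functional_extensionality => x; apply: functional_extensionality => z; exact: h.
Qed.

Lemma left_to_right (C : numClosedFieldType) n (A : bits n -> bits n -> C) (g : pauliG n) e :
  herm A -> e^* = e -> (forall x z, mm (sigma C g) A x z = e * A x z) ->
  forall x z, mm A (sigma C g) x z = e * A x z.
Proof.
move=> hA ce h x z.
have := congr1 (fun t => t^*) (h z x); rewrite cjM ce -hA => <-.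
rewrite /mm cjS; apply: eq_bigr => y _; by rewrite cjM -sigma_herm -hA mulrC.
Qed.

Lemma right_to_left (C : numClosedFieldType) n (A : bits n -> bits n -> C) (g : pauliG n) e :
  herm A -> e^* = e -> (forall x z, mm A (sigma C g) x z = e * A x z) ->
  forall x z, mm (sigma C g) A x z = e * A x z.
Proof.
move=> hA ce h x z.
have := congr1 (fun t => t^*) (h z x); rewrite cjM ce -hA => <-.
rewrite /mm cjS; apply: eq_bigr => y _; by rewrite cjM -sigma_herm -hA mulrC.
Qed.

Lemma anti_zero (C : numClosedFieldType) n (A : bits n -> bits n -> C) (f g : pauliG n) e :
  herm A -> e^* = e -> e * e = 1 -> omega f g ->
  (forall x z, mm (sigma C g) A x z = e * A x z) ->
  tr (mm (sigma C f) A) = 0.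
Proof.
move=> hA ce ee om h.
have hr := left_to_right hA ce h.
have hL : mm (sigma C g) A = fun x z => e * A x z by exact: fext2.
have hR : mm A (sigma C g) = fun x z => e * A x z by exact: fext2.
have hA' : A = fun x z => e * mm (sigma C g) A x z.
  by apply: fext2 => x z; rewrite h mulrA ee mul1r.
have hanti : mm (sigma C f) (sigma C g) = fun x z => (-1) * mm (sigma C g) (sigma C f) x z.
  by apply: fext2 => x z; rewrite sigma_anti om expr1.
set t := tr (mm (sigma C f) A).
have : t = - t.
  rewrite {1}/t {1}hA' mm_scale_r tr_scale -mmA' hanti mm_scale_l tr_scale mmA' tr_mmC mmA' hR.
  rewrite mm_scale_r tr_scale -/t.
  by rewrite mulN1r mulrN mulrA ee mul1r.
move/eqP; rewrite -subr_eq0 opprK -mulr2n -mulr_natr mulf_eq0 pnatr_eq0 orbF.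
by move/eqP.
Qed.

Lemma c1_neq0 (C : numClosedFieldType) a b : c1 C a b != 0.
Proof.
have hi := neq0Ci C.
by case: a => [[] []]; case: b => [[] []]; rewrite /c1 ?oppr_eq0 ?oner_neq0.
Qed.

Lemma cc_neq0 (C : numClosedFieldType) n (f g : pauliG n) : cc C f g != 0.
Proof. by rewrite /cc prodf_seq_neq0; apply/allP => j _; rewrite c1_neq0. Qed.

Definition good (C : numClosedFieldType) n (g : pauliG n) (A B : bits n -> bits n -> C) : Prop :=
  exists e, (forall x z, mm (sigma C g) A x z = e * A x z) /\
            (forall x z, mm (sigma C g) B x z = e * B x z).

Lemma stab_add (C : numClosedFieldType) n (g1 g2 : pauliG n) (A : bits n -> bits n -> C) e1 e2 :
  (forall x z, mm (sigma C g1) A x z = e1 * A x z) ->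
  (forall x z, mm (sigma C g2) A x z = e2 * A x z) ->
  forall x z, mm (sigma C (gadd g1 g2)) A x z = ((cc C g1 g2)^-1 * e1 * e2) * A x z.
Proof.
move=> h1 h2.
have hs : sigma C (gadd g1 g2) = fun x z => (cc C g1 g2)^-1 * mm (sigma C g1) (sigma C g2) x z.
  apply: fext2 => x z; by rewrite sigma_mul mulrA mulVf ?cc_neq0 ?mul1r.
have h1' := fext2 h1; have h2' := fext2 h2.
move=> x z; rewrite hs mm_scale_l mmA' h2' mm_scale_r h1'.
by rewrite -!mulrA [e2 * (e1 * _)]mulrCA.
Qed.

Lemma good_add (C : numClosedFieldType) n (g1 g2 : pauliG n) (A B : bits n -> bits n -> C) :
  good g1 A B -> good g2 A B -> good (gadd g1 g2) A B.
Proof.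
move=> [e1 [a1 b1]] [e2 [a2 b2]]; exists ((cc C g1 g2)^-1 * e1 * e2); split; exact: stab_add.
Qed.

Lemma good0 (C : numClosedFieldType) n (A B : bits n -> bits n -> C) : good (gzero n) A B.
Proof.
have h (D : bits n -> bits n -> C) x z : mm (sigma C (gzero n)) D x z = 1 * D x z.
  rewrite /mm mul1r; under eq_bigr do rewrite sigma0; exact: sum_dl.
by exists 1; split => x z; apply: h.
Qed.

Lemma good_e (C : numClosedFieldType) n (g : pauliG n) (B : bits n -> bits n -> C) e :
  tr B = 1 -> (forall x z, mm (sigma C g) B x z = e * B x z) -> e * e = 1 /\ e^* = e.
Proof.
move=> htr h.
have h' := fext2 h.
have : mm (mm (sigma C g) (sigma C g)) B = fun x z => e * e * B x z.
  by rewrite mmA' h' mm_scale_r h'; apply: fext2 => x z; rewrite mulrA.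
have -> : mm (sigma C g) (sigma C g) = fun x z => (x == z)%:R.
  by apply: fext2 => x z; exact: sigma_sq.
move/(congr1 (@tr C n)); rewrite tr_scale.
have -> : tr (mm (fun x z : bits n => ((x == z)%:R : C)) B) = tr B.
  apply: eq_bigr => x _; rewrite /mm; exact: sum_dl.
rewrite htr mulr1 => /esym ee; split => //.
have : (e - 1) * (e + 1) = e * e - 1 by ring.
rewrite ee subrr => /eqP; rewrite mulf_eq0 => /orP [].
  by rewrite subr_eq0 => /eqP He; rewrite He; exact: rmorph1.
by rewrite addr_eq0 => /eqP He; rewrite He; exact: rmorphN1.
Qed.

Unset Implicit Arguments.

Theorem lemma2 (C : numClosedFieldType) (n : nat) (M : finType) (party : 'I_n -> M)
  (S : {set pauliG n}) (eps : pauliG n -> bool) (psi : bits n -> C) :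
  self_dual S ->
  \sum_(x : bits n) psi x * (psi x)^* = 1 ->
  (forall f, f \in S -> apply_op (sigma C f) psi = (fun x => (-1) ^+ eps f * psi x)) ->
  S = Sloc party S ->
  forall rho : bits n -> bits n -> C,
    Gamma party psi rho <-> (forall x y, rho x y = proj psi x y).
Proof.
move=> hSD hnorm hstab hloc rho.
set Psi := proj psi.
have trPsi : tr Psi = 1 by exact: hnorm.
have hermPsi : herm Psi by move=> x y; rewrite /Psi /proj cjM conjCK mulrC.
have stabPsi : forall f, f \in S -> forall x z,
    mm (sigma C f) Psi x z = (-1) ^+ eps f * Psi x z.
  move=> f hf x z; have := congr1 (fun v => v x) (hstab f hf); rewrite /apply_op /= => e.
  rewrite /mm /Psi /proj.
  under eq_bigr do rewrite mulrA.
  by rewrite -mulr_suml e mulrA.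
split.
- move=> [[hpsd htr] hpt].
  have hpsd' : psd rho := hpsd.
  have htr' : tr rho = 1 := htr.
  have hermr := psd_herm hpsd'.
  have gcol : forall alpha g, g \in coloc party S alpha -> good g rho Psi.
    move=> alpha g hg.
    have gS : g \in S by move: hg; rewrite /coloc inE => /andP [].
    have [ee ce] := good_e trPsi (stabPsi g gS).
    have trP : tr (mm Psi (sigma C g)) = (-1) ^+ eps g.
      by rewrite tr_mmC (fext2 (stabPsi g gS)) tr_scale trPsi mulr1.
    have trR : tr (mm rho (sigma C g)) = (-1) ^+ eps g.
      rewrite (tr_local _ hg) -trP (tr_local _ hg).
      apply: eq_bigr => u _; apply: eq_bigr => v _; by rewrite hpt.
    exists ((-1) ^+ eps g); split; last exact: stabPsi.
    apply: right_to_left => //; exact: psd_stab.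
  have gS : forall f, f \in S -> good f rho Psi.
    move=> f; rewrite {1}hloc /Sloc inE => /existsP [gg /andP [/forallP hg /eqP ->]].
    apply: (big_ind (fun h => good h rho Psi)).
    + exact: good0.
    + move=> a b; exact: good_add.
    + move=> a _; exact: (gcol a _ (hg a)).
  move=> x y; apply: pauli_determined => f.
  case: (boolP (f \in S)) => hf.
    have [e [h1 h2]] := gS f hf.
    by rewrite (fext2 h1) (fext2 h2) !tr_scale htr' trPsi.
  have : exists g, (g \in S) && omega f g.
    move: hf; rewrite {1}hSD inE negb_forall => /existsP [g].
    by rewrite negb_imply negbK => hg; exists g.
  move=> [g /andP [hg om]].
  have [e [h1 h2]] := gS g hg.
  have [ee ce] := good_e trPsi h2.
  by rewrite (anti_zero hermr ce ee om h1) (anti_zero hermPsi ce ee om h2).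
- move=> h.
  have -> : rho = Psi by apply: fext2.
  split; last by [].
  split; last exact: hnorm.
  move=> v.
  set s := \sum_(x : bits n) (v x)^* * psi x.
  have -> : \sum_(x : bits n) \sum_(y : bits n) (v x)^* * Psi x y * v y = s * s^*.
    rewrite /s cjS mulr_suml; apply: eq_bigr => x _; rewrite mulr_sumr; apply: eq_bigr => y _.
    rewrite /Psi /proj cjM conjCK; ring.
  exact: mul_conjC_ge0.
Qed.
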